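(* Let $a(x)=1+x^i$ and $b(x)=x^j+x^{j+k}$ be two polynomials of weight two in $\mathbb{F}_2[x]/\langle x^n-1\rangle$. Then the girth $g(G)$ of the Tanner graph associated with the generalized bicycle code defined by $a(x)$ and $b(x)$ satisfies $g(G)\le 8$.
   Context: The Tanner graph of the GB code defined by $a(x)=\sum a_tx^t$, $b(x)=\sum b_tx^t$ is the bipartite graph with $n$ check nodes $x_0,\dots,x_{n-1}$ (X-checks) and $2n$ qubit nodes $q_0,\dots,q_{n-1},q'_0,\dots,q'_{n-1}$, where $x_t$ is adjacent to $q_c$ iff $a_{t-c}=1$ and to $q'_c$ iff $b_{t-c}=1$ (indices mod $n$). The girth is the length of a shortest cycle. *)

(* Defs.v *)
From HB Require Import structures.
From mathcomp Require Import all_boot all_order all_algebra.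
Set Implicit Arguments. Unset Strict Implicit. Unset Printing Implicit Defensive.
Import GRing.Theory.
Local Open Scope ring_scope.

(* An element of F_2[x]/<x^n - 1> is represented by its coefficient vector
   (a_0, ..., a_{n-1}) : 'I_n -> 'F_2. *)

Definition coef_mod (n : nat) (a : 'I_n -> 'F_2) (s : nat) : 'F_2 :=
  if (insub (s %% n)%N : option 'I_n) is Some t then a t else 0.

Definition monom (n e : nat) : 'I_n -> 'F_2 :=
  fun t => ((val t == e %% n)%N)%:R.
Arguments monom n e : clear implicits.

Definition poly_one (n : nat) : 'I_n -> 'F_2 := monom n 0.
Arguments poly_one n : clear implicits.

Definition padd (n : nat) (a b : 'I_n -> 'F_2) : 'I_n -> 'F_2 :=
  fun t => a t + b t.

Definition weight (n : nat) (a : 'I_n -> 'F_2) : nat :=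
  #|[set t : 'I_n | a t != 0]|.

(* Vertices of the Tanner graph: X-checks x_t (inl t), qubits q_c (inr (inl c))
   and q'_c (inr (inr c)). *)
Definition tvert (n : nat) : finType := ('I_n + ('I_n + 'I_n))%type.
Arguments tvert n : clear implicits.

Definition tanner_adj (n : nat) (a b : 'I_n -> 'F_2) : rel (tvert n) :=
  fun u v =>
    match u, v with
    | inl t, inr (inl c) => coef_mod a (t + n - c)%N != 0
    | inl t, inr (inr c) => coef_mod b (t + n - c)%N != 0
    | inr (inl c), inl t => coef_mod a (t + n - c)%N != 0
    | inr (inr c), inl t => coef_mod b (t + n - c)%N != 0
    | _, _ => false
    end.

Definition is_graph_cycle (V : finType) (e : rel V) (c : seq V) : bool :=
  [&& (3 <= size c)%N, uniq c & cycle e c].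

(* girth(G) <= m  iff  G has a cycle of length at most m
   (the girth of an acyclic graph being +infinity) *)
Definition girth_le (V : finType) (e : rel V) (m : nat) : Prop :=
  exists c : seq V, is_graph_cycle e c /\ (size c <= m)%N.

(* Main.v *)
Require Import Defs.
From mathcomp Require Import all_boot all_order all_algebra.
Import GRing.Theory.
Local Open Scope ring_scope.

Lemma coefmE m (f : 'I_(m.+2) -> 'F_2) (t c : 'I_(m.+2)) :
  coef_mod f (t + m.+2 - c)%N = f (t - c).
Proof.
rewrite /coef_mod.
have E : ((t + m.+2 - c) %% m.+2 = val (t - c)%R)%N.
  rewrite /= -addnBA; last by apply: ltnW.
  by rewrite modnDmr.
rewrite insubT; first by rewrite E ltn_mod.
move=> H; congr f; apply: val_inj => /=; exact: E.
Qed.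

Lemma valnat m e : (val (e%:R : 'Z_(m.+2)) = e %% m.+2)%N.
Proof. by rewrite Zp_nat. Qed.

Lemma f2E (x y : bool) : (((x : nat)%:R + (y : nat)%:R : 'F_2) != 0) = x (+) y.
Proof. by case: x; case: y. Qed.

Lemma addKC (V : zmodType) (x y : V) : x + y - x = y.
Proof. by rewrite addrC addKr. Qed.

Lemma eq_inl (A B : eqType) (x y : A) : (inl x == inl y :> A + B) = (x == y).
Proof. by []. Qed.
Lemma eq_inr (A B : eqType) (x y : B) : (inr x == inr y :> A + B) = (x == y).
Proof. by []. Qed.
Lemma eq_inlr (A B : eqType) (x : A) (y : B) : (inl x == inr y :> A + B) = false.
Proof. by []. Qed.
Lemma eq_inrl (A B : eqType) (x : B) (y : A) : (inr x == inl y :> A + B) = false.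
Proof. by []. Qed.

Lemma main m (a b : 'I_(m.+2) -> 'F_2) (I J K : 'Z_(m.+2)) :
  a 0 != 0 -> a I != 0 -> b J != 0 -> b (J + K) != 0 -> I != 0 -> K != 0 ->
  girth_le (tanner_adj a b) 8.
Proof.
move=> a0 aI bJ bJK I0 K0.
have EA : forall t c : 'Z_(m.+2), t = c -> tanner_adj a b (inl t) (inr (inl c)) /\ tanner_adj a b (inr (inl c)) (inl t).
  by move=> t c ->; rewrite /tanner_adj coefmE subrr.
have EAI : forall t c : 'Z_(m.+2), t = c + I -> tanner_adj a b (inl t) (inr (inl c)) /\ tanner_adj a b (inr (inl c)) (inl t).
  by move=> t c ->; rewrite /tanner_adj coefmE addKC.
have EB : forall t c : 'Z_(m.+2), t = c + J -> tanner_adj a b (inl t) (inr (inr c)) /\ tanner_adj a b (inr (inr c)) (inl t).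
  by move=> t c ->; rewrite /tanner_adj coefmE addKC.
have EBK : forall t c : 'Z_(m.+2), t = c + (J + K) -> tanner_adj a b (inl t) (inr (inr c)) /\ tanner_adj a b (inr (inr c)) (inl t).
  by move=> t c ->; rewrite /tanner_adj coefmE addKC.
have [IK|IK] := eqVneq I K.
  have [h1 _] := EA 0 0 erefl.
  have [_ h2] := EAI I 0 ltac:(by rewrite add0r).
  have [h3 _] := EBK I (-J) ltac:(by rewrite -IK addrA addNr add0r).
  have [_ h4] := EB 0 (-J) ltac:(by rewrite addNr).
  exists [:: inl (0 : 'Z_(m.+2)); inr (inl (0 : 'Z_(m.+2))); inl I; inr (inr (- J))].
  split=> //; rewrite /is_graph_cycle; move: h1 h2 h3 h4; move: (tanner_adj a b) => e.
  move=> h1 h2 h3 h4; rewrite /= !inE /= h1 h2 h3 h4 /= andbT.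
  rewrite !(eq_inl, eq_inr, eq_inlr, eq_inrl) /= orbF andbT eq_sym; exact: I0.
have n1 : (0 == I) = false by rewrite eq_sym; apply/negbTE.
have n3 : (0 == K) = false by rewrite eq_sym; apply/negbTE.
have [IK2|IK2] := eqVneq (I + K) 0.
  have [h1 _] := EA 0 0 erefl.
  have [_ h2] := EAI I 0 ltac:(by rewrite add0r).
  have [h3 _] := EB I (I - J) ltac:(by rewrite subrK).
  have [_ h4] := EBK 0 (I - J) ltac:(by rewrite addrA subrK IK2).
  exists [:: inl (0 : 'Z_(m.+2)); inr (inl (0 : 'Z_(m.+2))); inl I; inr (inr (I - J))].
  split=> //; rewrite /is_graph_cycle; move: h1 h2 h3 h4; move: (tanner_adj a b) => e.
  move=> h1 h2 h3 h4; rewrite /= !inE /= h1 h2 h3 h4 /= andbT.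
  by rewrite !(eq_inl, eq_inr, eq_inlr, eq_inrl) /= n1.
have n2 : (0 == I + K) = false by rewrite eq_sym; apply/negbTE.
have n4 : (I == I + K) = false by rewrite eq_sym -subr_eq0 addKC; apply/negbTE.
have n5 : (I == K) = false by apply/negbTE.
have n6 : (I + K == K) = false by rewrite -subr_eq0 addrK; apply/negbTE.
have n7 : (I - J == - J) = false by rewrite -subr_eq0 opprK subrK; apply/negbTE.
have [e1 _] := EA 0 0 erefl.
have [_ e2] := EAI I 0 ltac:(by rewrite add0r).
have [e3 _] := EB I (I - J) ltac:(by rewrite subrK).
have [_ e4] := EBK (I + K) (I - J) ltac:(by rewrite addrA subrK).
have [e5 _] := EAI (I + K) K ltac:(by rewrite addrC).
have [_ e6] := EA K K erefl.
have [e7 _] := EBK K (- J) ltac:(by rewrite addKr).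
have [_ e8] := EB 0 (- J) ltac:(by rewrite addNr).
exists [:: inl (0 : 'Z_(m.+2)); inr (inl (0 : 'Z_(m.+2))); inl I; inr (inr (I - J));
           inl (I + K); inr (inl K); inl K; inr (inr (- J))].
split=> //; rewrite /is_graph_cycle; move: e1 e2 e3 e4 e5 e6 e7 e8; move: (tanner_adj a b) => e.
move=> e1 e2 e3 e4 e5 e6 e7 e8; rewrite /= !inE /= e1 e2 e3 e4 e5 e6 e7 e8 /= andbT.
rewrite !(eq_inl, eq_inr, eq_inlr, eq_inrl) /= n1 n2 n3 n4 n5 n6 n7.
done.
Qed.

Lemma monomE m e (u : 'I_(m.+2)) : monom m.+2 e u = (u == (e%:R : 'Z_(m.+2)))%:R.
Proof. by rewrite /monom -valnat val_eqE. Qed.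

Local Close Scope ring_scope.

Theorem lemma4 (n i j k : nat) :
  let a := padd (poly_one n) (monom n i) in
  let b := padd (monom n j) (monom n (j + k)) in
  weight a = 2 -> weight b = 2 ->
  girth_le (tanner_adj a b) 8.
Proof.
case: n => [|[|m]] a b wa wb;
  try by (have := max_card [set t | a t != 0%R]; rewrite card_ord -/(weight a) wa).
set I : 'Z_(m.+2) := i%:R%R; set J : 'Z_(m.+2) := j%:R%R; set K : 'Z_(m.+2) := k%:R%R.
have aE : forall u, (a u != 0)%R = (u == 0%R) (+) (u == I).
  by move=> u; rewrite /a /padd /poly_one !monomE f2E.
have bE : forall u, (b u != 0)%R = (u == J) (+) (u == (J + K)%R).
  by move=> u; rewrite /b /padd !monomE natrD f2E.
have I0 : (I != 0)%R.
  apply/negP => /eqP I0; move: wa; rewrite /weight.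
  suff -> : [set t | a t != 0%R] = set0 by rewrite cards0.
  by apply/setP => t; rewrite !inE aE I0 addbb.
have K0 : (K != 0)%R.
  apply/negP => /eqP K0; move: wb; rewrite /weight.
  suff -> : [set t | b t != 0%R] = set0 by rewrite cards0.
  by apply/setP => t; rewrite !inE bE K0 addr0 addbb.
apply: (@main m a b I J K) => //.
- by rewrite aE eqxx eq_sym (negbTE I0).
- by rewrite aE eqxx (negbTE I0).
- rewrite bE eqxx /=; apply/negP => /eqP H.
  by move: K0; rewrite -(addKC _ J K) -H subrr eqxx.
- rewrite bE eqxx addbT; apply/negP => /eqP H.
  by move: K0; rewrite -(addKC _ J K) H subrr eqxx.
Qed.
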